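(* Let $F$, $H$, $X$, $\Omega$, $Q$ and the sequences generated by the IneIREG method be as described in the context, with no inertia, i.e. $\alpha_k=0$ for all $k\ge0$, and suppose $H$ is $\mu$-strongly monotone for some $\mu>0$. Suppose $\eta_k\equiv\eta>0$ and $\lambda_k\in[\underline\lambda,\overline\lambda]$ for all $k\ge0$ with $0<\underline\lambda\le\overline\lambda<1/L$, $L:=L_F+\eta L_H$. Let $\beta_k:=\big(\frac{1}{1-\lambda_k^2L^2}+\frac{1}{2\lambda_k\eta\mu}\big)^{-1}$, $p_k:=\big(\prod_{i=0}^k(1-\beta_i)\big)^{-1}$ for $k\ge0$, for $k\ge1$ $\Lambda_k:=\sum_{j=0}^{k-1}\lambda_j\eta p_j$ and $\overline y_k:=\Lambda_k^{-1}\sum_{j=0}^{k-1}\lambda_j\eta p_jy_j$, and $\beta:=\big(\frac{1}{1-\overline\lambda^2L^2}+\frac{1}{2\underline\lambda\eta\mu}\big)^{-1}\in(0,1)$. Then for all $k\ge1$, $$-B_H\,\mathrm{dist}(\overline y_k,Q)\le\mathrm{Gap}(\overline y_k,H,Q)\le(1-\beta)^k\Big(\frac{D_X^2}{2\underline\lambda\eta}\Big).$$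
   Context: Work in $\mathbb{R}^n$ with Euclidean inner product $\langle\cdot,\cdot\rangle$ and norm $\|\cdot\|$. The maps $F\colon \mathrm{Dom}\,F\to\mathbb{R}^n$ and $H\colon\mathrm{Dom}\,H\to\mathbb{R}^n$ are monotone and Lipschitz continuous with constants $L_F>0$ and $L_H>0$; $H$ is $\mu$-strongly monotone means $\langle H(x)-H(y),x-y\rangle\ge\mu\|x-y\|^2$ for all $x,y\in\mathrm{Dom}\,H$. $X$ is a nonempty compact convex set and $\Omega$ a nonempty closed convex set with $X\subset\Omega\subset\mathrm{Dom}\,F\cap\mathrm{Dom}\,H$; $P_X,P_\Omega$ denote orthogonal projections. $Q:=\{x\in X:\langle F(x),y-x\rangle\ge0\ \forall y\in X\}$ is assumed nonempty. $D_X:=\sup_{x,y\in X}\|x-y\|$, $B_H:=\sup_{x\in Q}\|H(x)\|$, $\mathrm{dist}(y,Q)$ is the Euclidean distance to $Q$. $\mathrm{Gap}(z,H,Q):=\sup_{x\in Q}\langle H(x),z-x\rangle$. IneIREG method: start with $x_0=x_{-1}\in X$; for $k=0,1,\dots$, with parameters $\alpha_k\ge0$, $\lambda_k>0$, $\eta_k>0$, set $w_k=x_k+\alpha_k(x_k-x_{k-1})$, $w'_k=P_\Omega(w_k)$, $y_k=P_X\big(w_k-\lambda_k(F(w'_k)+\eta_kH(w'_k))\big)$, $x_{k+1}=P_X\big(w_k-\lambda_k(F(y_k)+\eta_kH(y_k))\big)$. *)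

(* Defs.v *)
From HB Require Import structures.
From mathcomp Require Import all_boot all_order all_algebra.
From mathcomp Require Import all_classical all_reals all_analysis.
Set Implicit Arguments. Unset Strict Implicit. Unset Printing Implicit Defensive.
Import Order.TTheory GRing.Theory Num.Theory.
Import numFieldNormedType.Exports.
Local Open Scope classical_set_scope.
Local Open Scope ring_scope.

Section Defs.
Variables (R : realType) (n : nat).
Notation vec := 'rV[R]_n.

Definition inner (u v : vec) : R := \sum_(i < n) u ord0 i * v ord0 i.
Definition enorm (u : vec) : R := Num.sqrt (inner u u).

Definition is_convex_set (A : set vec) : Prop :=
  forall x y, A x -> A y -> forall t : R, 0 <= t <= 1 ->
    A (t *: x + (1 - t) *: y).

Definition is_projection (A : set vec) (P : vec -> vec) : Prop :=
  forall x, A (P x) /\ forall y, A y -> enorm (x - P x) <= enorm (x - y).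

Definition op_monotone_on (D : set vec) (G : vec -> vec) : Prop :=
  forall x y, D x -> D y -> 0 <= inner (G x - G y) (x - y).

Definition op_strongly_monotone_on (D : set vec) (G : vec -> vec) (mu : R) : Prop :=
  forall x y, D x -> D y -> mu * enorm (x - y) ^+ 2 <= inner (G x - G y) (x - y).

Definition op_lipschitz_on (D : set vec) (G : vec -> vec) (L : R) : Prop :=
  forall x y, D x -> D y -> enorm (G x - G y) <= L * enorm (x - y).

Definition VIsol (F : vec -> vec) (X : set vec) : set vec :=
  [set x | X x /\ forall y, X y -> 0 <= inner (F x) (y - x)].

Definition set_diam (X : set vec) : R := sup [set enorm (x - y) | x in X & y in X].
Definition sup_norm_on (H : vec -> vec) (Q : set vec) : R := sup [set enorm (H x) | x in Q].
Definition dist_to (y : vec) (Q : set vec) : R := inf [set enorm (y - x) | x in Q].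
Definition Gap (z : vec) (H : vec -> vec) (Q : set vec) : R :=
  sup [set inner (H x) (z - x) | x in Q].

End Defs.

(* Main.v *)
Require Import Defs.
From HB Require Import structures.
From mathcomp Require Import all_boot all_order all_algebra.
From mathcomp Require Import all_classical all_reals all_analysis.
Import Order.TTheory GRing.Theory Num.Theory.
Import numFieldNormedType.Exports.
Local Open Scope classical_set_scope.
Local Open Scope ring_scope.
From mathcomp Require Import ring lra.
Set Implicit Arguments. Unset Strict Implicit. Unset Printing Implicit Defensive.
Section Inner.
Variables (R : realType) (n : nat).
Notation vec := 'rV[R]_n.
Implicit Types u v w : vec.

Lemma innerC u v : inner u v = inner v u.
Proof. by apply: eq_bigr => i _; rewrite mulrC. Qed.

Lemma innerDl u v w : inner (u + v) w = inner u w + inner v w.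
Proof. by rewrite /inner -big_split; apply: eq_bigr => i _; rewrite mxE mulrDl. Qed.

Lemma innerZl (k : R) u v : inner (k *: u) v = k * inner u v.
Proof. by rewrite /inner mulr_sumr; apply: eq_bigr => i _; rewrite mxE mulrA. Qed.

Lemma innerNl u v : inner (- u) v = - inner u v.
Proof. by rewrite -scaleN1r innerZl mulN1r. Qed.

Lemma innerBl u v w : inner (u - v) w = inner u w - inner v w.
Proof. by rewrite innerDl innerNl. Qed.

Lemma innerDr u v w : inner w (u + v) = inner w u + inner w v.
Proof. by rewrite innerC innerDl !(innerC w). Qed.

Lemma innerZr (k : R) u v : inner v (k *: u) = k * inner v u.
Proof. by rewrite innerC innerZl innerC. Qed.

Lemma innerNr u v : inner v (- u) = - inner v u.
Proof. by rewrite innerC innerNl innerC. Qed.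

Lemma innerBr u v w : inner w (u - v) = inner w u - inner w v.
Proof. by rewrite innerDr innerNr. Qed.

Lemma inner0l u : inner 0 u = 0.
Proof. by rewrite -(scale0r 0) innerZl mul0r. Qed.

Lemma inner_ge0 u : 0 <= inner u u.
Proof. by apply: sumr_ge0 => i _; rewrite -expr2 sqr_ge0. Qed.

Lemma inner_eq0 u : inner u u = 0 -> u = 0.
Proof.
move=> /eqP; rewrite /inner psumr_eq0; last by move=> i _; rewrite -expr2 sqr_ge0.
move=> /allP h; apply/rowP => i; rewrite mxE.
have := h i (mem_index_enum _); rewrite /= mulf_eq0 orbb => /eqP.
by rewrite (ord1 ord0).
Qed.

Lemma enorm_ge0 u : 0 <= enorm u.
Proof. exact: sqrtr_ge0. Qed.

Lemma enorm_sq u : enorm u ^+ 2 = inner u u.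
Proof. by rewrite sqr_sqrtr // inner_ge0. Qed.

Lemma CS u v : inner u v <= enorm u * enorm v.
Proof.
set c := inner u v.
have hq : forall t : R, 0 <= inner u u + 2 * t * c + t ^+ 2 * inner v v.
  move=> t; have := inner_ge0 (u + t *: v).
  rewrite !(innerDl, innerDr, innerZl, innerZr) (innerC v u) -/c.
  by move=> h; rewrite (_ : _ + _ = inner u u + t * c + (t * c + t * (t * inner v v))) //; ring.
have hc2 : c ^+ 2 <= inner u u * inner v v.
  have [hB|hB] := eqVneq (inner v v) 0.
    have -> : c = 0.
      apply/eqP/negPn/negP => hc0.
      have := hq (- (inner u u + 1) / (2 * c)); rewrite hB mulr0 addr0.
      have -> : inner u u + 2 * (- (inner u u + 1) / (2 * c)) * c = -1.
        by field; rewrite hc0.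
      by rewrite oppr_ge0 ler10.
    by rewrite hB expr0n /= mulr0.
  have hBp : 0 < inner v v by rewrite lt0r hB inner_ge0.
  have := hq (- c / inner v v).
  have -> : inner u u + 2 * (- c / inner v v) * c + (- c / inner v v) ^+ 2 * inner v v
    = inner u u - c ^+ 2 / inner v v by field.
  rewrite subr_ge0 ler_pdivrMr //.
have e2 : (enorm u * enorm v) ^+ 2 = inner u u * inner v v by rewrite exprMn !enorm_sq.
have s0 : 0 <= enorm u * enorm v by rewrite mulr_ge0 ?enorm_ge0.
move: e2 s0; set s := enorm u * enorm v; rewrite expr2 => e2 s0.
rewrite expr2 in hc2.
rewrite leNgt; apply/negP => hcs.
have : s * s < c * c by rewrite ltr_pM //.
lra.
Qed.

Lemma enorm_triangle u v : enorm (u + v) <= enorm u + enorm v.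
Proof.
have h1 : enorm (u + v) ^+ 2 <= (enorm u + enorm v) ^+ 2.
  rewrite enorm_sq !(innerDl, innerDr) (innerC v u) sqrrD !enorm_sq.
  have := CS u v; lra.
have := enorm_ge0 (u + v); have := enorm_ge0 u; have := enorm_ge0 v; nra.
Qed.

Lemma enormZ (k : R) u : enorm (k *: u) = `|k| * enorm u.
Proof.
rewrite /enorm innerZl innerZr mulrA -expr2 sqrtrM ?sqr_ge0 //.
by rewrite sqrtr_sqr.
Qed.

Lemma enormN u : enorm (- u) = enorm u.
Proof. by rewrite -scaleN1r enormZ normrN1 mul1r. Qed.

Lemma enorm0 : enorm (0 : vec) = 0.
Proof. by rewrite /enorm inner0l sqrtr0. Qed.

Lemma enorm_le_sq u v : (enorm u <= enorm v) = (inner u u <= inner v v).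
Proof. by rewrite /enorm ler_sqrt // inner_ge0. Qed.

End Inner.

Section Proj.
Variables (R : realType) (n : nat).
Notation vec := 'rV[R]_n.
Implicit Types u v w : vec.

Lemma proj_id (A : set vec) P x : is_projection A P -> A x -> P x = x.
Proof.
move=> hP Ax; have [_ h] := hP x; have := h x Ax.
rewrite subrr enorm0 => h0.
have : enorm (x - P x) = 0 by apply/le_anti; rewrite h0 enorm_ge0.
move=> /(congr1 (fun r => r ^+ 2)); rewrite enorm_sq expr0n /= => /inner_eq0.
by move/eqP; rewrite subr_eq0 => /eqP.
Qed.

Lemma proj_in (A : set vec) P x : is_projection A P -> A (P x).
Proof. by move=> hP; have [] := hP x. Qed.

Lemma normBZ (a b : vec) (t : R) :
  inner (a - t *: b) (a - t *: b) = inner a a - 2 * t * inner a b + t ^+ 2 * inner b b.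
Proof. rewrite !(innerBl, innerBr, innerZl, innerZr) (innerC b a); ring. Qed.

Lemma proj_var (A : set vec) P x y : is_convex_set A -> is_projection A P -> A y ->
  inner (x - P x) (y - P x) <= 0.
Proof.
move=> cA hP Ay; have [Ap h] := hP x.
set p := P x in Ap h *.
set a := x - p; set b := y - p; set c := inner a b; set B := inner b b.
have key : forall t : R, 0 < t <= 1 -> 2 * t * c <= t ^+ 2 * B.
  move=> t /andP[t0 t1].
  have Az := cA y p Ay Ap t; rewrite t1 ltW //= in Az.
  have := h _ (Az isT); rewrite enorm_le_sq.
  have -> : x - (t *: y + (1 - t) *: p) = a - t *: b.
    by apply/rowP => i; rewrite !mxE; ring.
  rewrite normBZ -/c -/B.
  move=> hh; have : 0 <= t * (t * B) - 2 * t * c by lra.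
  by rewrite expr2; lra.
have B0 : 0 <= B := inner_ge0 b.
rewrite leNgt; apply/negP => c0.
have Bc : 0 < B + c by lra.
set t := c / (B + c).
have t0 : 0 < t by rewrite divr_gt0.
have ht : t * (B + c) = c by rewrite /t mulfVK // gt_eqF.
have t1 : t <= 1 by rewrite ler_pdivrMr // mul1r; lra.
have := key t; rewrite t0 t1 => /(_ isT).
have tB : t * B = c - t * c by move: ht; rewrite mulrDr => ht; lra.
have e : t ^+ 2 * B = t * c - t * (t * c).
  by rewrite expr2 -mulrA tB; ring.
rewrite e => hh.
have : 0 < t * c by rewrite mulr_gt0.
have : 0 <= t * (t * c) by rewrite mulr_ge0 // ltW // mulr_gt0.
lra.
Qed.
End Proj.

Section Step.
Variables (R : realType) (n : nat).
Notation vec := 'rV[R]_n.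

Lemma eg_step (u v w z g h : vec) (K m r : R) :
  inner (u - g - w) (z - w) <= 0 ->
  inner (u - h - v) (w - v) <= 0 ->
  inner (h - g) (h - g) <= K * inner (u - v) (u - v) ->
  m * inner (v - z) (v - z) + r <= inner g (v - z) ->
  inner (w - z) (w - z) <= inner (u - z) (u - z) - (1 - K) * inner (u - v) (u - v)
     - 2 * m * inner (v - z) (v - z) - 2 * r.
Proof.
have hq := inner_ge0 ((h - g) - (w - v)).
rewrite !(innerBl, innerBr, innerDl, innerDr) in hq *.
rewrite !(innerC v u, innerC w u, innerC z u, innerC g u, innerC h u,
  innerC w v, innerC z v, innerC g v, innerC h v, innerC z w, innerC g w,
  innerC h w, innerC g z, innerC h z, innerC h g) in hq *.
move=> h1 h2 h3 h4.
lra.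
Qed.

Lemma beta_comb (w1 w2 Na Nb ab : R) : 0 < w1 -> 0 < w2 ->
  0 <= w1 ^+ 2 * Na - 2 * w1 * w2 * ab + w2 ^+ 2 * Nb ->
  (1 / w1 + 1 / w2)^-1 * (Na + 2 * ab + Nb) <= w1 * Na + w2 * Nb.
Proof.
move=> p1 p2 hq.
have -> : (1 / w1 + 1 / w2)^-1 = w1 * w2 / (w1 + w2).
  by field; rewrite ?gt_eqF // ?addr_gt0.
rewrite mulrAC ler_pdivrMr ?addr_gt0 //.
rewrite -subr_ge0.
have -> : (w1 * Na + w2 * Nb) * (w1 + w2) - w1 * w2 * (Na + 2 * ab + Nb)
  = w1 ^+ 2 * Na - 2 * w1 * w2 * ab + w2 ^+ 2 * Nb by ring.
exact: hq.
Qed.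

Lemma normSZ (a b : vec) (s t : R) :
  inner (s *: a - t *: b) (s *: a - t *: b) =
  s ^+ 2 * inner a a - 2 * s * t * inner a b + t ^+ 2 * inner b b.
Proof. rewrite !(innerBl, innerBr, innerZl, innerZr) (innerC b a); ring. Qed.

Lemma normD (a b : vec) :
  inner (a + b) (a + b) = inner a a + 2 * inner a b + inner b b.
Proof. rewrite !(innerDl, innerDr) (innerC b a); ring. Qed.

Lemma step2 (u v w z g h : vec) (K m r : R) :
  inner (u - g - w) (z - w) <= 0 ->
  inner (u - h - v) (w - v) <= 0 ->
  inner (h - g) (h - g) <= K * inner (u - v) (u - v) ->
  m * inner (v - z) (v - z) + r <= inner g (v - z) ->
  0 < 1 - K -> 0 < m ->
  inner (w - z) (w - z) <=
    (1 - (1 / (1 - K) + 1 / (2 * m))^-1) * inner (u - z) (u - z) - 2 * r.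
Proof.
move=> h1 h2 h3 h4 pK pm.
have := eg_step h1 h2 h3 h4.
have -> : u - z = (u - v) + (v - z) by rewrite addrA subrK.
have hq := inner_ge0 ((1 - K) *: (u - v) - (2 * m) *: (v - z)).
rewrite normSZ in hq.
have hb := beta_comb pK (mulr_gt0 (ltr0Sn _ 1) pm) hq.
move: hb; rewrite !normD.
move: (inner (u - v) (u - v)) (inner (v - z) (v - z)) (inner (u - v) (v - z)) => Na Nb ab.
move: (_ ^-1) => be.
move=> hb he; lra.
Qed.

End Step.

Section Bnd.
Variables (R : realType) (n : nat).
Notation vec := 'rV[R]_n.

Lemma coord_le (x : vec) i : `|x ord0 i| <= `|x|.
Proof.
have := le_bigmax 0 (fun ij : 'I_1 * 'I_n => `|x ij.1 ij.2|) (ord0, i).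
by rewrite -mx_normrE.
Qed.

Lemma compact_ebounded (X : set vec) : compact X ->
  exists M, 0 <= M /\ forall x, X x -> enorm x <= M.
Proof.
move=> /compact_bounded [M [_ hM]].
have hb : forall x, X x -> `|x| <= `|M| + 1.
  move=> x Xx; apply: (hM (`|M| + 1)) => //.
  have := ler_norm M; lra.
have [M' [M'0 {}hb]] : exists M' : R, 0 <= M' /\ forall x, X x -> `|x| <= M'.
  by exists (`|M| + 1); split => //; rewrite addr_ge0.
exists (Num.sqrt (n%:R * M' ^+ 2)); split; first exact: sqrtr_ge0.
move=> x Xx; rewrite /enorm ler_sqrt; last by rewrite mulr_ge0 // sqr_ge0.
have -> : n%:R * M' ^+ 2 = \sum_(i < n) M' ^+ 2 by rewrite sumr_const card_ord mulr_natl.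
apply: ler_sum => i _.
rewrite -expr2 -real_normK ?num_real //.
rewrite lerXn2r ?nnegrE ?normr_ge0 //.
all: try (apply: (le_trans (coord_le x i)); exact: hb).
Qed.

End Bnd.

Section Scal.
Variable R : realType.

Lemma inv_ge1 (w : R) : 0 < w < 1 -> 1 < 1 / w.
Proof. by case/andP => w0 w1; rewrite ltr_pdivlMr // mul1r. Qed.

Lemma beta01 (a b : R) : 1 < a -> 0 < b -> 0 < (a + b)^-1 < 1.
Proof.
move=> a1 b0; have s1 : 1 < a + b by lra.
have s0 : 0 < a + b by lra.
rewrite invr_gt0 s0 /= -[X in _ < X]invr1 ltf_pV2 ?posrE //.
Qed.

Lemma beta_mono (a b a' b' : R) : 0 < a -> 0 < b -> a <= a' -> b <= b' ->
  (a' + b')^-1 <= (a + b)^-1.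
Proof.
move=> a0 b0 aa bb; rewrite lef_pV2 ?posrE; try lra.
Qed.

Lemma div1_mono (u v : R) : 0 < u -> u <= v -> 1 / v <= 1 / u.
Proof. move=> u0 uv; rewrite !div1r lef_pV2 ?posrE //; lra. Qed.

Lemma prod_le (b : nat -> R) (be : R) k : (forall i, 0 < 1 - b i <= 1 - be) ->
  0 < \prod_(i < k) (1 - b i) /\ \prod_(i < k) (1 - b i) <= (1 - be) ^+ k.
Proof.
move=> hb; elim: k => [|k [IH1 IH2]]; first by rewrite big_ord0 expr0 ltr01.
rewrite big_ord_recr /= exprSr; have /andP[h1 h2] := hb k; split.
  exact: mulr_gt0.
by apply: ler_pM => //; apply: ltW.
Qed.

End Scal.

Section Sums.
Variables (R : realType) (n : nat).
Notation vec := 'rV[R]_n.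
Lemma inner_sumr (u : vec) (c : nat -> R) (v : nat -> vec) k :
  inner u (\sum_(j < k) c j *: v j) = \sum_(j < k) c j * inner u (v j).
Proof.
elim: k => [|k IH]; first by rewrite !big_ord0 innerC inner0l.
by rewrite !big_ord_recr /= innerDr innerZr IH.
Qed.
End Sums.

Unset Implicit Arguments.

Theorem corollary4p11 (R : realType) (n : nat)
  (F H : 'rV[R]_n -> 'rV[R]_n) (DomF DomH X Omega : set 'rV[R]_n)
  (PX POmega : 'rV[R]_n -> 'rV[R]_n)
  (LF LH mu eta lam_lo lam_hi : R)
  (alpha lambda : nat -> R) (x y w w' : nat -> 'rV[R]_n) :
  0 < LF -> 0 < LH ->
  op_monotone_on DomF F -> op_lipschitz_on DomF F LF ->
  op_monotone_on DomH H -> op_lipschitz_on DomH H LH ->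
  0 < mu -> op_strongly_monotone_on DomH H mu ->
  X !=set0 -> compact X -> is_convex_set X ->
  Omega !=set0 -> closed Omega -> is_convex_set Omega ->
  X `<=` Omega -> Omega `<=` DomF `&` DomH ->
  is_projection X PX -> is_projection Omega POmega ->
  VIsol F X !=set0 ->
  (* no inertia *)
  (forall k, alpha k = 0) ->
  0 < eta ->
  0 < lam_lo -> lam_lo <= lam_hi -> lam_hi < 1 / (LF + eta * LH) ->
  (forall k, lam_lo <= lambda k <= lam_hi) ->
  (* IneIREG iterates, with x_{-1} = x_0 (encoded by x (k.-1) at k = 0) *)
  X (x 0%N) ->
  (forall k, w k = x k + alpha k *: (x k - x k.-1)) ->
  (forall k, w' k = POmega (w k)) ->
  (forall k, y k = PX (w k - lambda k *: (F (w' k) + eta *: H (w' k)))) ->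
  (forall k, x k.+1 = PX (w k - lambda k *: (F (y k) + eta *: H (y k)))) ->
  let L := LF + eta * LH in
  let betak := fun k : nat =>
    (1 / (1 - lambda k ^+ 2 * L ^+ 2) + 1 / (2 * lambda k * eta * mu))^-1 in
  let p := fun k : nat => (\prod_(i < k.+1) (1 - betak i))^-1 in
  let Lam := fun k : nat => \sum_(j < k) lambda j * eta * p j in
  let ybar := fun k : nat =>
    (Lam k)^-1 *: \sum_(j < k) (lambda j * eta * p j) *: y j in
  let beta := (1 / (1 - lam_hi ^+ 2 * L ^+ 2) + 1 / (2 * lam_lo * eta * mu))^-1 in
  let Q := VIsol F X in
  (0 < beta < 1) /\
  forall k : nat, (1 <= k)%N ->
    - sup_norm_on H Q * dist_to (ybar k) Q <= Gap (ybar k) H Q /\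
    Gap (ybar k) H Q <= (1 - beta) ^+ k * (set_diam X ^+ 2 / (2 * lam_lo * eta)).
Proof.
move=> LF0 LH0 monF lipF monH lipH mu0 smH Xn0 cX convX On0 clO convO XO ODom
  pX pO Qn0 alpha0 eta0 lo0 lolh hi1 lamb x0X ew ew' ey ex L betak p Lam ybar beta Q.
have XD : forall u, X u -> DomF u /\ DomH u.
  by move=> u /XO /ODom [].
have L0 : 0 < L by rewrite /L addr_gt0 // mulr_gt0.
have hiL : lam_hi * L < 1 by rewrite -ltr_pdivlMr // -/L; rewrite mulrC mul1r in hi1 *.
have lamk : forall k, 0 < lambda k /\ lambda k * L < 1.
  move=> k; have /andP[l1 l2] := lamb k; split; first lra.
  by apply: le_lt_trans hiL; rewrite ler_pM2r.
have ewk : forall k, w k = x k by move=> k; rewrite ew alpha0 scale0r addr0.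
have xX : forall k, X (x k).
  by elim=> // k _; rewrite ex; apply: proj_in pX.
have yX : forall k, X (y k) by move=> k; rewrite ey; apply: proj_in pX.
have ew'k : forall k, w' k = x k.
  by move=> k; rewrite ew' ewk; apply: proj_id pO (XO _ (xX k)).
pose G u := F u + eta *: H u.
have Glip : forall u v, X u -> X v ->
    inner (G u - G v) (G u - G v) <= L ^+ 2 * inner (u - v) (u - v).
  move=> u v Xu Xv.
  have [DFu DHu] := XD u Xu; have [DFv DHv] := XD v Xv.
  have e : G u - G v = (F u - F v) + eta *: (H u - H v).
    by apply/rowP => i; rewrite !mxE; ring.
  have h1 : enorm (G u - G v) <= L * enorm (u - v).
    rewrite e; apply: (le_trans (enorm_triangle _ _)); rewrite enormZ ger0_norm; last exact: ltW.
    have := lipF u v DFu DFv; have := ler_wpM2l (ltW eta0) (lipH u v DHu DHv).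
    rewrite /L; lra.
  rewrite -!enorm_sq -exprMn lerXn2r // nnegrE ?enorm_ge0 //.
  by rewrite mulr_ge0 ?enorm_ge0 // ltW.
have w1pos : forall k, 0 < 1 - lambda k ^+ 2 * L ^+ 2 < 1.
  move=> k; have [l0 lL] := lamk k; rewrite -exprMn.
  have t0 : 0 < lambda k * L by rewrite mulr_gt0.
  move: t0 lL; move: (lambda k * L) => t t0 t1; rewrite expr2; apply/andP; split; nra.
have hi0 : 0 < lam_hi by lra.
have whi : 0 < 1 - lam_hi ^+ 2 * L ^+ 2 < 1.
  rewrite -exprMn.
  have t0 : 0 < lam_hi * L by rewrite mulr_gt0.
  move: t0 hiL; move: (lam_hi * L) => t t0 t1; rewrite expr2; apply/andP; split; nra.
have w2pos : forall k, 0 < 2 * lambda k * eta * mu.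
  by move=> k; have [l0 _] := lamk k; rewrite !mulr_gt0.
have bk : forall k, 0 < betak k < 1.
  move=> k; apply: beta01; first exact: inv_ge1.
  by rewrite divr_gt0.
have b01 : 0 < beta < 1.
  apply: beta01; first exact: inv_ge1.
  by rewrite divr_gt0 // !mulr_gt0.
have bkge : forall k, beta <= betak k.
  move=> k; have [l0 lL] := lamk k; have /andP[lk1 lk2] := lamb k.
  apply: beta_mono.
  - by rewrite divr_gt0 //; case/andP: (w1pos k).
  - by rewrite divr_gt0.
  - apply: div1_mono; first by case/andP: whi.
    rewrite lerD2l lerN2 ler_pM2r ?exprn_gt0 //.
    by rewrite lerXn2r // nnegrE ltW.
  - apply: div1_mono; first by rewrite !mulr_gt0.
    by rewrite ler_pM2r // ler_pM2r // ler_pM2l.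
have step : forall z, Q z -> forall k,
    inner (x k.+1 - z) (x k.+1 - z) <=
    (1 - betak k) * inner (x k - z) (x k - z) -
      2 * (lambda k * eta * inner (H z) (y k - z)).
  move=> z [zX zQ] k.
  have [l0 lL] := lamk k.
  have hx : PX (x k - lambda k *: G (y k)) = x k.+1 by rewrite ex ewk.
  have hy : PX (x k - lambda k *: G (x k)) = y k by rewrite ey ewk ew'k.
  have h1 := proj_var (x k - lambda k *: G (y k)) convX pX zX; rewrite hx in h1.
  have h2 := proj_var (x k - lambda k *: G (x k)) convX pX (xX k.+1); rewrite hy in h2.
  have h3 : inner (lambda k *: G (x k) - lambda k *: G (y k))
                  (lambda k *: G (x k) - lambda k *: G (y k))
            <= lambda k ^+ 2 * L ^+ 2 * inner (x k - y k) (x k - y k).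
    rewrite -scalerBr innerZl innerZr mulrA -expr2 -mulrA.
    by apply: ler_wpM2l; [exact: sqr_ge0 | exact: Glip].
  have [DFy DHy] := XD _ (yX k); have [DFz DHz] := XD _ zX.
  have h4 : lambda k * eta * mu * inner (y k - z) (y k - z) +
            lambda k * eta * inner (H z) (y k - z) <=
            inner (lambda k *: G (y k)) (y k - z).
    have hF : 0 <= inner (F (y k)) (y k - z).
      have := monF _ _ DFy DFz; have := zQ _ (yX k); rewrite (innerBl (F (y k))); lra.
    have sH := smH _ _ DHy DHz; rewrite enorm_sq (innerBl (H (y k))) in sH.
    have A := mulr_ge0 (ltW l0) hF.
    have B := ler_wpM2l (mulr_ge0 (ltW l0) (ltW eta0)) sH.
    rewrite /G /= (@innerZl R n) (innerDl (F (y k))) (@innerZl R n eta); lra.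
  have pm : 0 < lambda k * eta * mu by rewrite !mulr_gt0.
  have pK : 0 < 1 - lambda k ^+ 2 * L ^+ 2 by case/andP: (w1pos k).
  have := step2 h1 h2 h3 h4 pK pm.
  have -> : 2 * (lambda k * eta * mu) = 2 * lambda k * eta * mu by rewrite !mulrA.
  by [].
pose P' k := \prod_(i < k) (1 - betak i).
have P'b : forall k, 0 < P' k /\ P' k <= (1 - beta) ^+ k.
  move=> k; apply: prod_le => i; have /andP[b1 b2] := bk i; have := bkge i.
  move=> h; apply/andP; split; lra.
have pk : forall k, p k = (P' k * (1 - betak k))^-1.
  by move=> k; rewrite /p /P' big_ord_recr.
have tele : forall z, Q z -> forall k,
    inner (x k - z) (x k - z) / P' k +
    2 * \sum_(j < k) lambda j * eta * p j * inner (H z) (y j - z)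
    <= inner (x 0%N - z) (x 0%N - z).
  move=> z Qz; elim=> [|k IH].
    by rewrite /P' !big_ord0 divr1 mulr0 addr0.
  rewrite big_ord_recr /= pk.
  have Sk := step z Qz k.
  have [q0 _] := P'b k; have /andP[bk0 bk1] := bk k.
  have o0 : 0 < 1 - betak k by lra.
  have -> : P' k.+1 = P' k * (1 - betak k) by rewrite /P' big_ord_recr.
  have qo0 : 0 < (P' k * (1 - betak k))^-1 by rewrite invr_gt0 mulr_gt0.
  have Sk' := ler_wpM2r (ltW qo0) Sk.
  have e : ((1 - betak k) * inner (x k - z) (x k - z) -
            2 * (lambda k * eta * inner (H z) (y k - z))) * (P' k * (1 - betak k))^-1
          = inner (x k - z) (x k - z) / P' k -
            2 * (lambda k * eta * inner (H z) (y k - z)) * (P' k * (1 - betak k))^-1.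
    by field; apply/andP; split; apply: lt0r_neq0.
  rewrite e in Sk'.
  move: IH Sk'.
  move: (inner (x k - z) (x k - z) / P' k) (inner (x k.+1 - z) (x k.+1 - z))
    (\sum_(j < k) lambda j * eta * p j * inner (H z) (y j - z)) => a b c.
  move: (P' k * (1 - betak k))^-1 (inner (H z) (y k - z)) => r i.
  rewrite -/(_ / _).
  move=> h1 h2; lra.
have [M [M0 hM]] := compact_ebounded cX.
set D := set_diam X.
have diam_ub : forall u v, X u -> X v -> enorm (u - v) <= D.
  move=> u v Xu Xv; apply: sup_upper_bound; last by exists u => //; exists v.
  split; first by exists (enorm (u - v)); exists u => //; exists v.
  exists (M + M) => r [a Xa [b Xb <-]].
  apply: (le_trans (enorm_triangle _ _)); rewrite enormN.
  by apply: lerD; apply: hM.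
have [BH hBH] : exists BH, forall u, X u -> enorm (H u) <= BH.
  exists (enorm (H (x 0%N)) + LH * (M + M)) => u Xu.
  have -> : H u = H (x 0%N) + (H u - H (x 0%N)) by rewrite addrC subrK.
  apply: (le_trans (enorm_triangle _ _)); rewrite lerD2l.
  have [_ DHu] := XD u Xu; have [_ DH0] := XD _ (xX 0%N).
  apply: (le_trans (lipH _ _ DHu DH0)); rewrite ler_pM2l //.
  apply: (le_trans (enorm_triangle _ _)); rewrite enormN.
  by apply: lerD; apply: hM.
have Qn0' := Qn0; case: Qn0' => z0 Qz0.
have BH0 : 0 <= BH by apply: le_trans (hBH _ Qz0.1); apply: enorm_ge0.
split; first exact: b01.
move=> k k1.
set yb := ybar k.
have pj0 : forall j, 0 < p j.
  by move=> j; rewrite pk invr_gt0 mulr_gt0 //; [case: (P'b j) | case/andP: (bk j) => _ b1; lra].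
have cj0 : forall j, 0 < lambda j * eta * p j.
  by move=> j; have [l0 _] := lamk j; rewrite !mulr_gt0.
have Lam0 : 0 < Lam k /\ lam_lo * eta <= Lam k * (1 - beta) ^+ k.
  case: k k1 @yb => // k' _ _; rewrite /Lam big_ord_recr /=.
  have s0 : 0 <= \sum_(i < k') lambda i * eta * p i.
    by apply: sumr_ge0 => i _; apply: ltW.
  have c0 := cj0 k'.
  split; first lra.
  have [Pp Pl] := P'b k'.+1.
  have hb0 : 0 <= (1 - beta) ^+ k'.+1 by apply: exprn_ge0; case/andP: b01 => _ b1; lra.
  have e1 : lambda k' * eta * p k' * P' k'.+1 = lambda k' * eta.
    rewrite /p -/(P' k'.+1) mulfVK //; exact: lt0r_neq0.
  have h1 : lambda k' * eta * p k' * P' k'.+1 <= lambda k' * eta * p k' * (1 - beta) ^+ k'.+1.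
    by rewrite ler_pM2l.
  have h2 : lam_lo * eta <= lambda k' * eta.
    by rewrite ler_pM2r //; case/andP: (lamb k').
  have h3 := mulr_ge0 s0 hb0.
  rewrite mulrDl; lra.
have ub_gap : forall z, Q z ->
    inner (H z) (yb - z) <= (1 - beta) ^+ k * (D ^+ 2 / (2 * lam_lo * eta)).
  move=> z Qz.
  have T := tele z Qz k.
  have Ek0 : 0 <= inner (x k - z) (x k - z) / P' k.
    by rewrite divr_ge0 ?inner_ge0 //; apply: ltW; case: (P'b k).
  have D0 : 0 <= D by apply: le_trans (diam_ub _ _ x0X x0X); apply: enorm_ge0.
  have E0D : inner (x 0%N - z) (x 0%N - z) <= D ^+ 2.
    rewrite -enorm_sq lerXn2r ?nnegrE ?enorm_ge0 //.
    exact: diam_ub x0X Qz.1.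
  move: T; set S := \sum_(j < k) _ => T.
  have SD : S <= D ^+ 2 / 2 by rewrite ler_pdivlMr //; lra.
  have [L0' LB] := Lam0.
  have eS : inner (H z) (yb - z) = S / Lam k.
    rewrite /yb /ybar innerBr innerZr (inner_sumr (H z) (fun j => lambda j * eta * p j) y k).
    have -> : S = \sum_(j < k) lambda j * eta * p j * inner (H z) (y j) - Lam k * inner (H z) z.
      rewrite /S /Lam mulr_suml -sumrB; apply: eq_bigr => j _; rewrite innerBr mulrBr //.
    by field; apply: lt0r_neq0.
  rewrite eS.
  have lo_eta : 0 < lam_lo * eta by rewrite mulr_gt0.
  have iL : (Lam k)^-1 * (lam_lo * eta) <= (1 - beta) ^+ k.
    have iL0 : 0 <= (Lam k)^-1 by rewrite invr_ge0 ltW.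
    have := ler_wpM2l iL0 LB.
    by rewrite [X in _ <= X -> _]mulrA mulVf ?mul1r //; apply: lt0r_neq0.
  have h1 : S / Lam k <= (D ^+ 2 / 2) / Lam k by rewrite ler_pM2r // invr_gt0.
  have e : (D ^+ 2 / 2) / Lam k = (D ^+ 2 / (2 * lam_lo * eta)) * ((Lam k)^-1 * (lam_lo * eta)).
    by field; apply/and3P; split; apply: lt0r_neq0.
  have h2 : (D ^+ 2 / (2 * lam_lo * eta)) * ((Lam k)^-1 * (lam_lo * eta)) <=
            (D ^+ 2 / (2 * lam_lo * eta)) * (1 - beta) ^+ k.
    by apply: ler_wpM2l => //; rewrite divr_ge0 ?sqr_ge0 // ltW // !mulr_gt0.
  by rewrite [X in _ <= X]mulrC; apply: (le_trans h1); rewrite e.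
have gap_sup : has_sup [set inner (H u) (yb - u) | u in Q].
  split; first by exists (inner (H z0) (yb - z0)); exists z0.
  exists (BH * (enorm yb + M)) => r [u Qu <-].
  apply: (le_trans (CS _ _)).
  have hu : enorm (yb - u) <= enorm yb + M.
    apply: (le_trans (enorm_triangle _ _)); rewrite enormN lerD2l; exact: hM Qu.1.
  by apply: ler_pM; rewrite ?enorm_ge0 // hBH //; case: Qu.
have nsup : has_sup [set enorm (H u) | u in Q].
  split; first by exists (enorm (H z0)); exists z0.
  by exists BH => r [u Qu <-]; apply: hBH; case: Qu.
split; last first.
  rewrite /Gap; apply: ge_sup; first by exists (inner (H z0) (yb - z0)); exists z0.
  by move=> r [u Qu <-]; apply: ub_gap.
rewrite -/yb.
set B := sup_norm_on H Q; set d := dist_to yb Q; set Gp := Gap yb H Q.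
have lowu : forall u, Q u -> - (B * enorm (yb - u)) <= Gp.
  move=> u Qu.
  have h1 : inner (H u) (yb - u) <= Gp by rewrite /Gp /Gap; apply: sup_upper_bound => //; exists u.
  have h2 : enorm (H u) <= B by rewrite /B /sup_norm_on; apply: sup_upper_bound => //; exists u.
  have h3 := CS (- H u) (yb - u); rewrite innerNl enormN in h3.
  have h4 := ler_wpM2r (enorm_ge0 (yb - u)) h2.
  lra.
have B0 : 0 <= B.
  apply: le_trans (enorm_ge0 (H z0)) _; rewrite /B /sup_norm_on; apply: sup_upper_bound => //; by exists z0.
rewrite le_eqVlt in B0; case/orP: B0 => [/eqP B0 | Bp].
  by have := lowu z0 Qz0; rewrite -B0 !mul0r oppr0 => h; rewrite mul0r.
have hd : - Gp / B <= d.
  rewrite /d /dist_to; apply: lb_le_inf; first by exists (enorm (yb - z0)); exists z0.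
  move=> r [u Qu <-]; rewrite ler_pdivrMr //; have := lowu u Qu => h; rewrite mulrC lerNl; exact: h.
move: hd; rewrite ler_pdivrMr // => hd; lra.
Qed.
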